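(* Let $f,g:\mathbb{N}\to\mathbb{N}_0$ be nondecreasing with $\lim_{n\to\infty}f(n)/g(n)=L\in\mathbb{R}$. Then for every $\nu\in\mathbf{Nn}\setminus\mathbb{N}$, $\hat f(\nu)/\hat g(\nu)\approx L$; equivalently, $\hat f(\nu)=L\,\hat g(\nu)+o(\hat g(\nu))$.
   Context: $\mathbb{N}=\{1,2,3,\dots\}$, $\mathbb{N}_0=\mathbb{N}\cup\{0\}$. $\mathbf{No}$ denotes Conway's ordered field of surreal numbers (containing $\mathbb{R}$), $\omega=\{0,1,2,\dots\mid\ \}$ its first infinite element. An omnific integer is a surreal $x$ with $x=\{x-1\mid x+1\}$; $\mathbf{Nn}$ (surnatural numbers) is the class of nonnegative omnific integers, $\mathbb{N}_0\subset\mathbf{Nn}$. For surreals $x,y$, $x\approx y$ means $x-y$ is infinitesimal (smaller in absolute value than every positive real), and $o(z)$ denotes a surreal $w$ with $w/z$ infinitesimal. For $f,g:\mathbb{N}\to\mathbb{N}_0$, $f\overset{\to}{=}g$ means $f(n)=g(n)$ for all $n\ge N$ for some $N$; $f\overset{\to}{<}g$ means $f(n)<g(n)$ for all $n\ge N$ for some $N$. Axiom of Extension (standing assumption): every nondecreasing $f:\mathbb{N}\to\mathbb{N}_0$ has an extension $\hat f:\mathbf{Nn}\to\mathbf{Nn}$ with $\hat f(n)=f(n)$ for $n\in\mathbb{N}$ (constant sequences extend to the same constants, the identity extends to the identity), such that for nondecreasing $f,g$: $f\overset{\to}{=}g\Rightarrow\hat f(\nu)=\hat g(\nu)$ for all $\nu\in\mathbf{Nn}\setminus\mathbb{N}$;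 $f\overset{\to}{<}g\Rightarrow\hat f(\nu)<\hat g(\nu)$ for all $\nu\in\mathbf{Nn}\setminus\mathbb{N}$; and $\widehat{f+g}=\hat f+\hat g$, $\widehat{f\cdot g}=\hat f\cdot\hat g$, $\widehat{f\circ g}=\hat f\circ\hat g$ where defined. *)

(* Defs.v *)
From HB Require Import structures.
From mathcomp Require Import all_boot all_order all_algebra.
From mathcomp Require Import all_classical all_reals all_analysis.
Set Implicit Arguments. Unset Strict Implicit. Unset Printing Implicit Defensive.
Import Order.TTheory GRing.Theory Num.Theory.
Local Open Scope ring_scope.

(* Sequences N -> N_0 are modelled as f : nat -> nat; only the values at
   n >= 1 (i.e. n in N = {1,2,...}) are ever used. *)

Definition nondecr (f : nat -> nat) : Prop :=
  forall m n : nat, (1 <= m)%N -> (m <= n)%N -> (f m <= f n)%N.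

Definition ev_eq (f g : nat -> nat) : Prop :=
  exists N : nat, forall n : nat, (N <= n)%N -> f n = g n.

Definition ev_lt (f g : nat -> nat) : Prop :=
  exists N : nat, forall n : nat, (N <= n)%N -> (f n < g n)%N.

(* The Axiom of Extension, for an ordered field S (playing the role of No)
   with a class Nn of surnatural numbers and an extension operator
   ext : f |-> \hat f.  "Nn \ N" is the set of surnaturals that are not
   natural numbers. *)
Definition not_nat (S : numDomainType) (x : S) : Prop :=
  forall n : nat, x <> n%:R.

Definition surnat_extension (S : realFieldType) (Nn : pred S)
    (ext : (nat -> nat) -> S -> S) : Prop :=
  (forall n : nat, Nn n%:R) /\
  (forall x, Nn x -> 0 <= x) /\
  (forall f, nondecr f -> forall x, Nn x -> Nn (ext f x)) /\
  (forall f, nondecr f -> forall n : nat, (1 <= n)%N -> ext f n%:R = (f n)%:R) /\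
  (forall c : nat, forall x, Nn x -> ext (fun _ => c) x = c%:R) /\
  (forall x, Nn x -> ext (fun n => n) x = x) /\
  (forall f g, nondecr f -> nondecr g -> ev_eq f g ->
     forall x, Nn x -> not_nat x -> ext f x = ext g x) /\
  (forall f g, nondecr f -> nondecr g -> ev_lt f g ->
     forall x, Nn x -> not_nat x -> ext f x < ext g x) /\
  (forall f g, nondecr f -> nondecr g ->
     forall x, Nn x -> ext (fun n => f n + g n)%N x = ext f x + ext g x) /\
  (forall f g, nondecr f -> nondecr g ->
     forall x, Nn x -> ext (fun n => f n * g n)%N x = ext f x * ext g x) /\
  (forall f g, nondecr f -> nondecr g ->
     (forall n, (1 <= n)%N -> (1 <= g n)%N) ->
     forall x, Nn x -> ext (fun n => f (g n)) x = ext f (ext g x)).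

Definition infinitesimal (R : realType) (S : realFieldType)
    (emb : R -> S) (x : S) : Prop :=
  forall e : R, 0 < e -> `|x| < emb e.

Definition little_o (R : realType) (S : realFieldType)
    (emb : R -> S) (w z : S) : Prop :=
  infinitesimal emb (w / z).

(* Main.v *)
Require Import Defs.
From HB Require Import structures.
From mathcomp Require Import all_boot all_order all_algebra.
From mathcomp Require Import all_classical all_reals all_analysis.
From mathcomp Require Import lra.
Import Order.TTheory GRing.Theory Num.Theory numFieldNormedType.Exports.
Local Open Scope classical_set_scope.
Local Open Scope ring_scope.

Lemma rat_between (R : realType) (a b : R) : 0 <= a -> a < b ->
  exists p q : nat, (0 < q)%N /\ a * q%:R < p%:R /\ p%:R < b * q%:R.
Proof.
move=> a0 ab.
have ba : 0 < b - a by rewrite subr_gt0.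
set q := (Num.truncn ((b - a)^-1)).+1.
have hq : (b - a)^-1 < q%:R by apply: truncnS_gt.
have hq1 : 1 < (b - a) * q%:R.
  by rewrite -(ltr_pM2l (x:=(b-a)^-1)) ?invr_gt0 // mulrA mulVf ?mul1r ?mulr1 // gt_eqF.
set p := (Num.truncn (a * q%:R)).+1.
exists p, q; split => //; split; first exact: truncnS_gt.
have : (Num.truncn (a * q%:R))%:R <= a * q%:R by rewrite truncn_le mulr_ge0.
rewrite /p -addn1 natrD => h.
have -> : b * q%:R = a * q%:R + (b - a) * q%:R by rewrite mulrBl addrC subrK.
by apply: ler_ltD.
Qed.

Lemma ev_of_cvg (R : realType) (u : nat -> R) (L eps : R) :
  u @ \oo --> L -> 0 < eps -> exists N, forall n, (N <= n)%N -> `|L - u n| < eps.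
Proof.
move=> /cvgrPdist_lt H e0; have [N _ HN] := H eps e0.
by exists N => n Nn; apply: HN.
Qed.

Theorem lemma6p6 (R : realType) (S : realFieldType)
    (emb : {rmorphism R -> S}) (Nn : pred S)
    (ext : (nat -> nat) -> S -> S) :
  (forall x y : R, x <= y -> emb x <= emb y) ->
  surnat_extension Nn ext ->
  forall (f g : nat -> nat) (L : R),
    nondecr f -> nondecr g ->
    (fun n : nat => ((f n)%:R / (g n)%:R : R)) @ \oo --> L ->
    forall nu : S, Nn nu -> not_nat nu ->
      infinitesimal emb (ext f nu / ext g nu - emb L) /\
      exists w : S, ext f nu = emb L * ext g nu + w /\
                    little_o emb w (ext g nu).
Proof.
move=> emon [hN [hpos [hNn [hval [hcst [hid [heq [hlt [hadd [hmul hcomp]]]]]]]]]].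
move=> f g L nf ng hcv nu Nnu nnu.
have embS : forall x y, x < y -> emb x < emb y.
  move=> x y xy; rewrite lt_neqAle emon ?ltW // andbT.
  by apply/negP => /eqP /fmorph_inj E; move: xy; rewrite E ltxx.
have ndc : forall c : nat, nondecr (fun _ => c) by move=> c m n _ _.
have nds : forall (a : nat) h, nondecr h -> nondecr (fun n => a * h n)%N.
  by move=> a h nh m n m1 mn; rewrite leq_mul2l nh ?orbT.
have extS : forall (a : nat) h, nondecr h ->
    ext (fun n => a * h n)%N nu = a%:R * ext h nu.
  move=> a h nh; rewrite (hmul (fun _ => a) h (ndc a) nh nu Nnu).
  by rewrite hcst.
have transfer : forall (a b : nat) h1 h2, nondecr h1 -> nondecr h2 ->
    ev_lt (fun n => a * h1 n)%N (fun n => b * h2 n)%N ->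
    a%:R * ext h1 nu < b%:R * ext h2 nu.
  move=> a b h1 h2 n1 n2 hl; rewrite -extS // -extS //.
  by apply: hlt => //; apply: nds.
set F := ext f nu; set G := ext g nu.
have F0 : 0 <= F by apply: hpos; apply: hNn.
have G0 : 0 <= G by apply: hpos; apply: hNn.
suff part1 : infinitesimal emb (F / G - emb L).
  split => //; exists (F - emb L * G); split; first by rewrite addrC subrK.
  have [->|Gn0] := eqVneq G 0.
    move=> e e0; rewrite invr0 mulr0 normr0.
    by rewrite -(rmorph0 emb); apply: embS.
  by rewrite /little_o mulrBl -mulrA divff // mulr1.
have embdiv : forall p q : nat, emb (p%:R / q%:R) = p%:R / q%:R.
  by move=> p q; rewrite fmorph_div !rmorph_nat.
have [[n0 [n01 gn0]]|Hg] := pselect (exists n0, (1 <= n0)%N /\ (1 <= g n0)%N); last first.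
  have g0 : forall n, (1 <= n)%N -> g n = 0%N.
    move=> n n1; apply/eqP; rewrite -leqn0 leqNgt; apply/negP => h.
    by apply: Hg; exists n.
  have GZ : G = 0.
    rewrite /G (heq g (fun _ => 0%N) ng (ndc 0%N)) ?hcst //.
    by exists 1%N => n /g0.
  have LZ : L = 0.
    apply/eqP; apply/negPn/negP => L0.
    have Lp : 0 < `|L| by rewrite normr_gt0.
    have [N HN] := ev_of_cvg _ _ _ _ hcv Lp.
    have := HN (maxn N 1) (leq_maxl _ _).
    by rewrite g0 ?leq_maxr // invr0 mulr0 subr0 ltxx.
  move=> e e0; rewrite GZ LZ invr0 mulr0 rmorph0 subr0 normr0.
  by rewrite -(rmorph0 emb); apply: embS.
have Gpos : 0 < G.
  have := hlt (fun _ => 0%N) g (ndc 0%N) ng _ nu Nnu nnu.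
  rewrite hcst //; apply; exists n0 => n n0n.
  by apply: leq_trans gn0 _; apply: ng.
have gpos : forall n, (n0 <= n)%N -> (0 < g n)%N.
  by move=> n n0n; apply: leq_trans gn0 _; apply: ng.
have L0 : 0 <= L.
  rewrite leNgt; apply/negP => Lneg.
  have Lp : 0 < - L by rewrite oppr_gt0.
  have [N HN] := ev_of_cvg _ _ _ _ hcv Lp.
  have := HN N (leqnn N); rewrite ltr_norml => /andP[h2 _].
  move: h2; rewrite opprK ltrDl oppr_gt0 ltNge.
  by rewrite divr_ge0.
move=> e e0; rewrite ltr_norml; apply/andP; split.
-
  rewrite ltrBrDl -rmorphN -rmorphD.
  have [Le|Le] := ltP (L - e) 0.
    apply: lt_le_trans (embS _ _ Le) _.
    by rewrite rmorph0 divr_ge0.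
  have Lel : L - e < L by rewrite ltrBlDr ltrDl.
  have [p [q [q0 [h1 h2]]]] := rat_between _ _ _ Le Lel.
  have q0' : 0 < q%:R :> R by rewrite ltr0n.
  have eps0 : 0 < L - p%:R / q%:R by rewrite subr_gt0 ltr_pdivrMr.
  have [N HN] := ev_of_cvg _ _ _ _ hcv eps0.
  have key : p%:R * G < q%:R * F.
    apply: transfer => //; exists (maxn N n0) => n hn.
    have gn := gpos n (leq_trans (leq_maxr _ _) hn).
    have := HN n (leq_trans (leq_maxl _ _) hn); rewrite ltr_norml => /andP[_ h].
    have gn' : 0 < (g n)%:R :> R by rewrite ltr0n.
    move: h; rewrite ltrD2l ltrN2 ltr_pdivrMr // mulrAC ltr_pdivlMr //.
    by rewrite -!natrM ltr_nat mulnC [(q * _)%N]mulnC.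
  have q0S : 0 < q%:R :> S by rewrite ltr0n.
  have hle : L - e <= p%:R / q%:R by rewrite ler_pdivlMr // ltW.
  apply: le_lt_trans (emon _ _ hle) _; rewrite embdiv.
  rewrite ltr_pdivrMr // mulrAC ltr_pdivlMr //.
  by rewrite [F * _]mulrC.
- have Le : L < L + e by rewrite ltrDl.
  have [p [q [q0 [h1 h2]]]] := rat_between _ _ _ L0 Le.
  have q0' : 0 < q%:R :> R by rewrite ltr0n.
  have eps0 : 0 < p%:R / q%:R - L by rewrite subr_gt0 ltr_pdivlMr.
  have [N HN] := ev_of_cvg _ _ _ _ hcv eps0.
  have key : q%:R * F < p%:R * G.
    apply: transfer => //; exists (maxn N n0) => n hn.
    have gn := gpos n (leq_trans (leq_maxr _ _) hn).
    have := HN n (leq_trans (leq_maxl _ _) hn); rewrite ltr_norml => /andP[h _].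
    have gn' : 0 < (g n)%:R :> R by rewrite ltr0n.
    move: h; rewrite opprB ltrD2l ltrN2 ltr_pdivrMr // mulrAC ltr_pdivlMr // -!natrM ltr_nat.
    by rewrite mulnC.
  have q0S : 0 < q%:R :> S by rewrite ltr0n.
  have hle : p%:R / q%:R <= L + e by rewrite ler_pdivrMr // ltW.
  rewrite ltrBlDl -rmorphD; apply: lt_le_trans (emon _ _ hle); rewrite embdiv.
  rewrite ltr_pdivlMr // mulrAC ltr_pdivrMr //.
  by rewrite mulrC.
Qed.
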